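(* Assume the setting in the context. (a) Assume Conditions (MM), (GG), (JS-cts) and (JD-jump). Suppose that for every $f\in\mathcal{D}_{\mathcal{X}}$ there exist $u_+\in\mathcal{X}^{\mathcal{U}}$ and $u_-\in\mathcal{X}^{\mathcal{V}}$ with $(\widehat Lu_+)|_{\mathcal{U}}=(\widehat Lu_-)|_{\mathcal{V}}=0$ and $\widetilde{\operatorname{Tr}}^{\mathcal{U}}_{\mathcal{X}}u_+=\widetilde{\operatorname{Tr}}^{\mathcal{V}}_{\mathcal{X}}u_-=f$. Then $\widetilde{\operatorname{Tr}}^{\mathcal{U}}_{\mathcal{X}}\widehat{\mathbf{S}}^L_{\mathcal{U}}:\mathcal{N}_{\mathcal{X}}\to\mathcal{D}_{\mathcal{X}}$ is onto. If moreover there is $C_0<\infty$ such that for every $f\in\mathcal{D}_{\mathcal{X}}$ such a pair can be chosen with $\|u_+\|_{\mathcal{X}^{\mathcal{U}}}\le C_0\|f\|_{\mathcal{D}_{\mathcal{X}}}$ and $\|u_-\|_{\mathcal{X}^{\mathcal{V}}}\le C_0\|f\|_{\mathcal{D}_{\mathcal{X}}}$, then there is $C_1$ such that every $f\in\mathcal{D}_{\mathcal{X}}$ equals $\widetilde{\operatorname{Tr}}^{\mathcal{U}}_{\mathcal{X}}\widehat{\mathbf{S}}^L_{\mathcal{U}}g$ for some $g\in\mathcal{N}_{\mathcal{X}}$ with $\|g\|_{\mathcal{N}_{\mathcal{X}}}\le C_1\|f\|_{\mathcal{D}_{\mathcal{X}}}$. (b) Assume Conditions (TT), (GG), (JD-cts)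 and (JS-jump). Suppose that for every $g\in\mathcal{N}_{\mathcal{X}}$ there exist $u_+\in\mathcal{X}^{\mathcal{U}}$ and $u_-\in\mathcal{X}^{\mathcal{V}}$ with $(\widehat Lu_+)|_{\mathcal{U}}=(\widehat Lu_-)|_{\mathcal{V}}=0$ and $\widehat{\mathbf{M}}^{\mathcal{U}}_Bu_+=\widehat{\mathbf{M}}^{\mathcal{V}}_Bu_-=g$. Then $\widehat{\mathbf{M}}^{\mathcal{U}}_B\widehat{\mathbf{D}}^B_{\mathcal{U}}:\mathcal{D}_{\mathcal{X}}\to\mathcal{N}_{\mathcal{X}}$ is onto. If moreover there is $C_0<\infty$ such that for every $g\in\mathcal{N}_{\mathcal{X}}$ such a pair can be chosen with $\|u_+\|_{\mathcal{X}^{\mathcal{U}}}\le C_0\|g\|_{\mathcal{N}_{\mathcal{X}}}$ and $\|u_-\|_{\mathcal{X}^{\mathcal{V}}}\le C_0\|g\|_{\mathcal{N}_{\mathcal{X}}}$, then there is $C_1$ such that every $g\in\mathcal{N}_{\mathcal{X}}$ equals $\widehat{\mathbf{M}}^{\mathcal{U}}_B\widehat{\mathbf{D}}^B_{\mathcal{U}}f$ for some $f\in\mathcal{D}_{\mathcal{X}}$ with $\|f\|_{\mathcal{D}_{\mathcal{X}}}\le C_1\|g\|_{\mathcal{N}_{\mathcal{X}}}$.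
   Context: Let $\mathcal{X}^{\mathcal{U}}$, $\mathcal{X}^{\mathcal{V}}$, $\mathcal{D}_{\mathcal{X}}$, $\mathcal{N}_{\mathcal{X}}$ be quasi-Banach spaces. For $\mathcal{O}\in\{\mathcal{U},\mathcal{V}\}$: let $u\mapsto(\widehat Lu)|_{\mathcal{O}}$ be a linear operator on $\mathcal{X}^{\mathcal{O}}$, let $\mathcal{K}^{\mathcal{O}}=\{u\in\mathcal{X}^{\mathcal{O}}:(\widehat Lu)|_{\mathcal{O}}=0\}$, and let $\widetilde{\operatorname{Tr}}^{\mathcal{O}}_{\mathcal{X}}:\mathcal{K}^{\mathcal{O}}\to\mathcal{D}_{\mathcal{X}}$, $\widehat{\mathbf{M}}^{\mathcal{O}}_B:\mathcal{K}^{\mathcal{O}}\to\mathcal{N}_{\mathcal{X}}$, $\widehat{\mathbf{D}}^B_{\mathcal{O}}:\mathcal{D}_{\mathcal{X}}\to\mathcal{X}^{\mathcal{O}}$, $\widehat{\mathbf{S}}^L_{\mathcal{O}}:\mathcal{N}_{\mathcal{X}}\to\mathcal{X}^{\mathcal{O}}$ be linear operators. For $\mathcal{O}\in\{\mathcal U,\mathcal V\}$ consider: (T)$_{\mathcal{O}}$ $\widetilde{\operatorname{Tr}}^{\mathcal{O}}_{\mathcal{X}}$ is bounded $\mathcal{K}^{\mathcal{O}}\to\mathcal{D}_{\mathcal{X}}$; (M)$_{\mathcal{O}}$ $\widehat{\mathbf{M}}^{\mathcal{O}}_B$ is bounded $\mathcal{K}^{\mathcal{O}}\to\mathcal{N}_{\mathcal{X}}$;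 (G)$_{\mathcal{O}}$ every $u\in\mathcal{K}^{\mathcal{O}}$ satisfies $u=-\widehat{\mathbf{D}}^B_{\mathcal{O}}(\widetilde{\operatorname{Tr}}^{\mathcal{O}}_{\mathcal{X}}u)+\widehat{\mathbf{S}}^L_{\mathcal{O}}(\widehat{\mathbf{M}}^{\mathcal{O}}_Bu)$. Condition (TT) means (T)$_{\mathcal U}$ and (T)$_{\mathcal V}$ both hold; likewise (MM), (GG). Further conditions (each including that the potentials involved lie in the respective $\mathcal K^{\mathcal O}$, so the expressions are defined): (JS-cts) $\widetilde{\operatorname{Tr}}^{\mathcal{U}}_{\mathcal{X}}(\widehat{\mathbf{S}}^L_{\mathcal{U}}g)-\widetilde{\operatorname{Tr}}^{\mathcal{V}}_{\mathcal{X}}(\widehat{\mathbf{S}}^L_{\mathcal{V}}g)=0$ for all $g\in\mathcal{N}_{\mathcal{X}}$; (JD-cts) $\widehat{\mathbf{M}}^{\mathcal{U}}_B(\widehat{\mathbf{D}}^B_{\mathcal{U}}f)-\widehat{\mathbf{M}}^{\mathcal{V}}_B(\widehat{\mathbf{D}}^B_{\mathcal{V}}f)=0$ for all $f\in\mathcal{D}_{\mathcal{X}}$; (JS-jump) $\widehat{\mathbf{M}}^{\mathcal{U}}_B(\widehat{\mathbf{S}}^L_{\mathcal{U}}g)+\widehat{\mathbf{M}}^{\mathcal{V}}_B(\widehat{\mathbf{S}}^L_{\mathcal{V}}g)=g$ for all $g\in\mathcal{N}_{\mathcal{X}}$; (JD-jump) $\widetilde{\operatorname{Tr}}^{\mathcal{U}}_{\mathcal{X}}(\widehat{\mathbf{D}}^B_{\mathcal{U}}f)+\widetilde{\operatorname{Tr}}^{\mathcal{V}}_{\mathcal{X}}(\widehat{\mathbf{D}}^B_{\mathcal{V}}f)=-f$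 for all $f\in\mathcal{D}_{\mathcal{X}}$. *)

(* Defs.v *)
(* Abstract quasi-Banach spaces over a numeric field K
   (covers K = R and K = C = R[i]). *)
From HB Require Import structures.
From mathcomp Require Import all_boot all_order all_algebra.
Set Implicit Arguments. Unset Strict Implicit. Unset Printing Implicit Defensive.
Import Order.TTheory GRing.Theory Num.Theory.
Local Open Scope ring_scope.

Definition quasi_norm (K : numFieldType) (V : lmodType K) (nrm : V -> K) : Prop :=
  [/\ (forall x, 0 <= nrm x),
      (forall x, nrm x = 0 -> x = 0),
      (forall (a : K) x, nrm (a *: x) = `|a| * nrm x) &
      (exists C : K, forall x y, nrm (x + y) <= C * (nrm x + nrm y))].

Definition qn_cauchy (K : numFieldType) (V : lmodType K) (nrm : V -> K)
  (u : nat -> V) : Prop :=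
  forall eps : K, 0 < eps -> exists N : nat,
    forall m n, (N <= m)%N -> (N <= n)%N -> nrm (u m - u n) < eps.

Definition qn_converges (K : numFieldType) (V : lmodType K) (nrm : V -> K)
  (u : nat -> V) (l : V) : Prop :=
  forall eps : K, 0 < eps -> exists N : nat,
    forall n, (N <= n)%N -> nrm (u n - l) < eps.

Definition quasi_banach (K : numFieldType) (V : lmodType K) (nrm : V -> K) : Prop :=
  quasi_norm nrm /\
  forall u : nat -> V, qn_cauchy nrm u -> exists l, qn_converges nrm u l.

Record QBSpace (K : numFieldType) := QBS {
  qb_car : lmodType K;
  qb_norm : qb_car -> K;
  qb_axiom : quasi_banach qb_norm }.

Coercion qb_car : QBSpace >-> lmodType.
Notation "`[| x |]" := (qb_norm x) (format "`[| x |]") : ring_scope.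

Definition lin (K : numFieldType) (V W : lmodType K) (T : V -> W) : Prop :=
  forall (a : K) u v, T (a *: u + v) = a *: T u + T v.

Definition lin_on (K : numFieldType) (V W : lmodType K) (P : V -> Prop)
  (T : V -> W) : Prop :=
  forall (a : K) u v, P u -> P v -> T (a *: u + v) = a *: T u + T v.

(* the null space K^O = { u : (L u)|_O = 0 } *)
Definition kerP (K : numFieldType) (V W : lmodType K) (L : V -> W) (u : V) : Prop :=
  L u = 0.

Definition bounded_on (K : numFieldType) (X Z : QBSpace K) (P : X -> Prop)
  (T : X -> Z) : Prop :=
  exists C : K, forall u, P u -> `[| T u |] <= C * `[| u |].

Definition green (K : numFieldType) (X D N : QBSpace K) (W : lmodType K)
  (L : X -> W) (Tr : X -> D) (M : X -> N) (Dp : D -> X) (Sp : N -> X) : Prop :=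
  forall u, kerP L u -> u = - Dp (Tr u) + Sp (M u).

(* Main.v *)
Require Import Defs.
From mathcomp Require Import all_boot all_order all_algebra.
Import Order.TTheory GRing.Theory Num.Theory.
Local Open Scope ring_scope.
Set Implicit Arguments. Unset Strict Implicit.
Section H.
Variable K : numFieldType.

Lemma lin_onD (V W : lmodType K) (P : V -> Prop) (T : V -> W) u v :
  lin_on P T -> P u -> P v -> T (u + v) = T u + T v.
Proof. by move=> H Pu Pv; have := H 1 u v Pu Pv; rewrite !scale1r. Qed.

Lemma lin_onB (V W : lmodType K) (P : V -> Prop) (T : V -> W) u v :
  lin_on P T -> P u -> P v -> T (u - v) = T u - T v.
Proof.
move=> H Pu Pv; have := H (-1) v u Pv Pu; rewrite !scaleN1r.
by rewrite [- v + u]addrC [- T v + T u]addrC.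
Qed.

Lemma linD (V W : lmodType K) (T : V -> W) u v :
  lin T -> T (u + v) = T u + T v.
Proof. by move=> H; have := H 1 u v; rewrite !scale1r. Qed.

Lemma linN (V W : lmodType K) (T : V -> W) u :
  lin T -> T (- u) = - T u.
Proof.
move=> H; have H0 : T 0 = 0.
  by have := H 1 0 0; rewrite !scale1r addr0 => /eqP; rewrite -subr_eq subrr eq_sym => /eqP.
by have := H (-1) u 0; rewrite !scaleN1r !addr0 H0 addr0.
Qed.

Lemma absC (a C b : K) : 0 <= a -> 0 <= b -> a <= C * b -> a <= `|C| * b.
Proof.
move=> a0 b0 h; have [eb|bn0] := eqVneq b 0.
  by rewrite eb mulr0; rewrite eb mulr0 in h.
have bp : 0 < b by rewrite lt_def bn0 b0.
have Cb : 0 <= C * b by apply: le_trans h.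
have C0 : 0 <= C.
  by have := divr_ge0 Cb b0; rewrite mulrK // unitfE.
by rewrite ger0_norm.
Qed.

Lemma qn_props (X : QBSpace K) :
  [/\ (forall x : X, 0 <= `[| x |]),
      (forall x : X, `[| - x |] = `[| x |]) &
      exists C : K, 0 <= C /\ forall x y : X, `[| x + y |] <= C * (`[| x |] + `[| y |])].
Proof.
case: (qb_axiom X) => [[n0 _ hom [C hC]] _]; split => //.
  by move=> x; rewrite -scaleN1r hom normrN1 mul1r.
exists `|C|; split => // x y; apply: absC => //; first by rewrite addr_ge0.
Qed.
End H.

Theorem theorem6p4 (K : numFieldType) (XU XV D N : QBSpace K)
  (YU YV : lmodType K) (LU : XU -> YU) (LV : XV -> YV)
  (TrU : XU -> D) (TrV : XV -> D) (MU : XU -> N) (MV : XV -> N)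
  (DU : D -> XU) (DV : D -> XV) (SU : N -> XU) (SV : N -> XV)
  (linLU : lin LU) (linLV : lin LV)
  (linTrU : lin_on (kerP LU) TrU) (linTrV : lin_on (kerP LV) TrV)
  (linMU : lin_on (kerP LU) MU) (linMV : lin_on (kerP LV) MV)
  (linDU : lin DU) (linDV : lin DV) (linSU : lin SU) (linSV : lin SV) :
  (* (a) *)
  ((* (MM) *) bounded_on (kerP LU) MU -> bounded_on (kerP LV) MV ->
   (* (GG) *) green LU TrU MU DU SU -> green LV TrV MV DV SV ->
   (* (JS-cts) *)
   (forall g : N, kerP LU (SU g) /\ kerP LV (SV g) /\
      TrU (SU g) - TrV (SV g) = 0) ->
   (* (JD-jump) *)
   (forall f : D, kerP LU (DU f) /\ kerP LV (DV f) /\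
      TrU (DU f) + TrV (DV f) = - f) ->
   (forall f : D, exists (up : XU) (um : XV),
      [/\ LU up = 0, LV um = 0, TrU up = f & TrV um = f]) ->
   (forall f : D, exists g : N, TrU (SU g) = f) /\
   ((exists C0 : K, forall f : D, exists (up : XU) (um : XV),
       [/\ LU up = 0, LV um = 0, TrU up = f, TrV um = f &
           `[| up |] <= C0 * `[| f |] /\ `[| um |] <= C0 * `[| f |]]) ->
    exists C1 : K, forall f : D, exists g : N,
      TrU (SU g) = f /\ `[| g |] <= C1 * `[| f |]))
  /\
  (* (b) *)
  ((* (TT) *) bounded_on (kerP LU) TrU -> bounded_on (kerP LV) TrV ->
   (* (GG) *) green LU TrU MU DU SU -> green LV TrV MV DV SV ->
   (* (JD-cts) *)
   (forall f : D, kerP LU (DU f) /\ kerP LV (DV f) /\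
      MU (DU f) - MV (DV f) = 0) ->
   (* (JS-jump) *)
   (forall g : N, kerP LU (SU g) /\ kerP LV (SV g) /\
      MU (SU g) + MV (SV g) = g) ->
   (forall g : N, exists (up : XU) (um : XV),
      [/\ LU up = 0, LV um = 0, MU up = g & MV um = g]) ->
   (forall g : N, exists f : D, MU (DU f) = g) /\
   ((exists C0 : K, forall g : N, exists (up : XU) (um : XV),
       [/\ LU up = 0, LV um = 0, MU up = g, MV um = g &
           `[| up |] <= C0 * `[| g |] /\ `[| um |] <= C0 * `[| g |]]) ->
    exists C1 : K, forall g : N, exists f : D,
      MU (DU f) = g /\ `[| f |] <= C1 * `[| g |])).
Proof.
split.
- move=> [CMU hMU] [CMV hMV] gU gV JS JD.
  have key : forall f up um, LU up = 0 -> LV um = 0 -> TrU up = f -> TrV um = f ->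
      TrU (SU (MU up + MV um)) = f.
    move=> f up um hu hv tu tv.
    have [kU [kV JSe]] := JS (MV um).
    have [kU' [kV' JSe']] := JS (MU up).
    have [dU [dV JDe]] := JD f.
    have eU : SU (MU up) = up + DU f.
      by rewrite {2}(gU up hu) tu addrAC addNr add0r.
    have eV : SV (MV um) = um + DV f.
      by rewrite {2}(gV um hv) tv addrAC addNr add0r.
    rewrite linD // (lin_onD linTrU kU' kU).
    move/eqP: JSe; rewrite subr_eq0 => /eqP ->.
    rewrite eU eV (lin_onD linTrU hu dU) (lin_onD linTrV hv dV) tu tv.
    by rewrite addrACA JDe addrK.
  move=> ex; split.
    move=> f; have [up [um [hu hv tu tv]]] := ex f.
    by exists (MU up + MV um); apply: key tu tv.
  move=> [C0 hC0].
  have [n0 _ [Cq [Cq0 hq]]] := qn_props N.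
  have [n0U _ _] := qn_props XU.
  have [n0V _ _] := qn_props XV.
  have [n0D _ _] := qn_props D.
  exists (Cq * (`|CMU| * `|C0| + `|CMV| * `|C0|)) => f.
  have [up [um [hu hv tu tv [bu bv]]]] := hC0 f.
  exists (MU up + MV um); split; first by apply: key tu tv.
  have bu' := absC (n0U _) (n0D _) bu.
  have bv' := absC (n0V _) (n0D _) bv.
  have mu' := absC (n0 _) (n0U _) (hMU up hu).
  have mv' := absC (n0 _) (n0V _) (hMV um hv).
  apply: (le_trans (hq _ _)).
  rewrite -mulrA ler_wpM2l // mulrDl.
  apply: lerD.
    apply: (le_trans mu'); rewrite -mulrA ler_wpM2l //.
  apply: (le_trans mv'); rewrite -mulrA ler_wpM2l //.
- move=> [CTU hTU] [CTV hTV] gU gV JD JS.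
  have key : forall g up um, LU up = 0 -> LV um = 0 -> MU up = g -> MV um = g ->
      MU (DU (- (TrU up + TrV um))) = g.
    move=> g up um hu hv tu tv.
    have [kU [kV JSe]] := JS g.
    have [dU [dV JDe]] := JD (TrV um).
    have [dU' [dV' _]] := JD (TrU up).
    have eU : DU (TrU up) = SU g - up.
      by rewrite {2}(gU up hu) tu opprD opprK addrCA subrr addr0.
    have eV : DV (TrV um) = SV g - um.
      by rewrite {2}(gV um hv) tv opprD opprK addrCA subrr addr0.
    rewrite linN // linD //.
    have k0 : kerP LU 0.
      by rewrite /kerP; have := linLU 1 0 0; rewrite !scale1r addr0 => /eqP; rewrite -subr_eq subrr eq_sym => /eqP.
    have -> : - (DU (TrU up) + DU (TrV um)) = 0 - (DU (TrU up) + DU (TrV um)) by rewrite add0r.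
    have kS : kerP LU (DU (TrU up) + DU (TrV um)).
      by rewrite /kerP linD // dU' dU addr0.
    rewrite (lin_onB linMU k0 kS).
    rewrite (lin_onD linMU dU' dU).
    move/eqP: JDe; rewrite subr_eq0 => /eqP ->.
    rewrite eU eV (lin_onB linMU kU hu) (lin_onB linMV kV hv) tu tv.
    have M0 : MU 0 = 0.
      have := lin_onB linMU k0 k0; rewrite subrr => ->; by rewrite subrr.
    rewrite M0 addrACA JSe.
    by rewrite add0r addrA subrr add0r opprK.
  move=> ex; split.
    move=> g; have [up [um [hu hv tu tv]]] := ex g.
    by exists (- (TrU up + TrV um)); apply: key tu tv.
  move=> [C0 hC0].
  have [n0 nN [Cq [Cq0 hq]]] := qn_props D.
  have [n0U _ _] := qn_props XU.
  have [n0V _ _] := qn_props XV.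
  have [n0N _ _] := qn_props N.
  exists (Cq * (`|CTU| * `|C0| + `|CTV| * `|C0|)) => g.
  have [up [um [hu hv tu tv [bu bv]]]] := hC0 g.
  exists (- (TrU up + TrV um)); split; first by apply: key tu tv.
  have bu' := absC (n0U _) (n0N _) bu.
  have bv' := absC (n0V _) (n0N _) bv.
  have mu' := absC (n0 _) (n0U _) (hTU up hu).
  have mv' := absC (n0 _) (n0V _) (hTV um hv).
  rewrite nN.
  apply: (le_trans (hq _ _)).
  rewrite -mulrA ler_wpM2l // mulrDl.
  apply: lerD.
    apply: (le_trans mu'); rewrite -mulrA ler_wpM2l //.
  apply: (le_trans mv'); rewrite -mulrA ler_wpM2l //.
Qed.
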